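(* There exists a constant $\widehat c>0$ such that for all $N$ large enough and all $n\in\mathbb{Z}_+$, $$\|\check\pi-\zeta\|_{\mathrm{tv}}\le\frac{5\cdot 2^N n}{N!}+2e^{1-\widehat c n/N^3}.$$ Consequently $\limsup_{N\to\infty}\frac{1}{N\ln N}\ln\|\check\pi-\zeta\|_{\mathrm{tv}}\le -1$.
   Context: Let $\pi_N$ be the law of the number of fixed points of a uniform random permutation of $\{1,\dots,N\}$, $\check\pi$ the law $\pi_N$ conditioned on $\{0,\dots,N-4\}$, and $\zeta$ the Poisson law of parameter 1 conditioned on $\{0,\dots,N-4\}$. $\|\mu-\mu'\|_{\mathrm{tv}}=\sup_A|\mu(A)-\mu'(A)|$. *)

(* Defs.v *)
From HB Require Import structures.
From mathcomp Require Import all_boot all_order all_algebra all_fingroup.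
From mathcomp Require Import all_classical all_reals all_analysis.
Set Implicit Arguments. Unset Strict Implicit. Unset Printing Implicit Defensive.
Import Order.TTheory GRing.Theory Num.Theory.
Local Open Scope ring_scope.

(* number of fixed points of a permutation of {1..N} (represented as 'I_N) *)
Definition nfix (N : nat) (s : 'S_N) : nat := #|[set i | s i == i]|.

Definition piN (R : realType) (N : nat) (k : nat) : R :=
  #|[set s : 'S_N | nfix s == k]|%:R / (N`!)%:R.

Definition poisson1 (R : realType) (k : nat) : R := expR (-1) / (k`!)%:R.

Definition condlaw (R : realType) (M : nat) (mu : nat -> R) (k : nat) : R :=
  if (k < M)%N then mu k / (\sum_(j < M) mu j) else 0.

Definition massM (R : realType) (M : nat) (mu : nat -> R) (A : set nat) : R :=
  \sum_(k < M | `[< A k >]) mu k.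

Definition tvM (R : realType) (M : nat) (mu nu : nat -> R) : R :=
  sup [set `|massM M mu A - massM M nu A| | A in [set: set nat]].

(* check_pi = pi_N conditioned on {0,...,N-4}; zeta = Poisson(1) conditioned
   on {0,...,N-4}.  The set {0,...,N-4} is {k | k < N-3}. *)
Definition check_pi (R : realType) (N : nat) : nat -> R := condlaw (N - 3) (piN R N).
Definition zeta (R : realType) (N : nat) : nat -> R := condlaw (N - 3) (@poisson1 R).

(* Main.v *)
Require Import Defs.
From HB Require Import structures.
From mathcomp Require Import all_boot all_order all_algebra all_fingroup.
From mathcomp Require Import all_classical all_reals all_analysis.
From mathcomp Require Import ring lra zify.
Import Order.TTheory GRing.Theory Num.Theory.
Local Open Scope ring_scope.
Set Implicit Arguments. Unset Strict Implicit.
Lemma fixmom N j : (\sum_(s : 'S_N) 'C(nfix s, j) = 'C(N, j) * (N - j)`!)%N.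
Proof.
transitivity (\sum_(s : 'S_N) \sum_(T : {set 'I_N})
   ((T \subset [set i | s i == i]) && (#|T| == j) : nat))%N.
  apply: eq_bigr => s _; rewrite /nfix -cards_draws -sum1_card big_mkcond /=.
  by apply: eq_bigr => T _; rewrite inE; case: ifP.
rewrite exchange_big /=.
transitivity (\sum_(T : {set 'I_N}) ((#|T| == j) : nat) * (N - j)`!)%N.
  apply: eq_bigr => T _; case: eqP => [<-|_]; last first.
    by rewrite mul0n big1 // => s _; rewrite andbF.
  rewrite mul1n.
  have -> : (N - #|T| = #|~: T|)%N by have := cardsC T; rewrite card_ord => E; rewrite -{1}E addKn.
  rewrite -card_perm -sum1_card [in RHS]big_mkcond /=.
  apply: eq_bigr => s _; rewrite andbT.
  have -> : (s \in perm_on (~: T)) = (T \subset [set i | s i == i]).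
    apply/idP/idP => /fintype.subsetP H; apply/fintype.subsetP => x.
      move=> xT; rewrite inE; apply/negPn/negP => sx.
      by have := H x sx; rewrite inE xT.
    rewrite !inE => sx; apply/negP => xT.
    by have := H x xT; rewrite inE (negbTE sx).
  by case: (T \subset _).
rewrite -big_distrl /=; congr (_ * _)%N.
have := card_draws 'I_N j; rewrite card_ord => <-.
rewrite -sum1_card [in RHS]big_mkcond /=.
by apply: eq_bigr => T _; rewrite inE; case: eqP.
Qed.
Lemma sum_window (R : realType) (F : nat -> R) n k m : (k <= m)%N -> (m < n)%N ->
  (forall j, (j < n)%N -> (j < k)%N || (m < j)%N -> F j = 0) ->
  \sum_(j < n) F j = \sum_(i < (m - k).+1) F (k + i)%N.
Proof.
move=> km mn H0.
rewrite -!(big_mkord xpredT) (big_cat_nat (leq0n k)) /=; last by apply: leq_trans (ltnW mn).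
rewrite big1_seq /= ?add0r; last first.
  move=> j; rewrite ?andTb mem_index_iota => /andP[_ jk]; apply: H0; rewrite ?jk //.
  by apply: leq_trans mn; apply: leq_trans km; apply: ltnW.
rewrite (@big_cat_nat _ _ _ m.+1 k n) //=; last by apply: leq_trans (leqnSn m).
rewrite [X in _ + X]big1_seq ?addr0; last first.
  by move=> j; rewrite ?andTb mem_index_iota => /andP[mj jn]; apply: H0; rewrite ?mj ?orbT.
rewrite -{1}(add0n k) big_addn subSn //.
rewrite big_mkord.
by apply: eq_bigr => i _; rewrite addnC.
Qed.

Lemma binprod m j k : (k <= j)%N -> (j <= m)%N ->
  ('C(m, j) * 'C(j, k) = 'C(m, k) * 'C(m - k, j - k))%N.
Proof.
move=> kj jm.
have pos : (0 < k`! * (j - k)`! * (m - j)`!)%N by rewrite !muln_gt0 !fact_gt0.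
apply/eqP; rewrite -(eqn_pmul2r pos); apply/eqP.
have e1 : ('C(m, j) * 'C(j, k) * (k`! * (j - k)`! * (m - j)`!) = m`!)%N.
  rewrite -(bin_fact jm) -(bin_fact kj); ring.
have km : (k <= m)%N by apply: leq_trans jm.
have e2 : ('C(m, k) * 'C(m - k, j - k) * (k`! * (j - k)`! * (m - j)`!) = m`!)%N.
  rewrite -(bin_fact km).
  have jkmk : (j - k <= m - k)%N by rewrite leq_sub2r.
  have := bin_fact jkmk; rewrite subnBA // subnK // => <-.
  ring.
by rewrite e1 e2.
Qed.

Lemma altbin (R : realType) n : \sum_(i < n.+1) (-1) ^+ i * ('C(n, i))%:R = ((n == 0)%N)%:R :> R.
Proof.
rewrite (eq_bigr (fun i : 'I_n.+1 => (-1)^+i *+ 'C(n,i))); last first.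
  by move=> i _; rewrite mulr_natr.
by rewrite -exprD1n addNr expr0n.
Qed.

Lemma Sid (R : realType) N m k : (m <= N)%N -> (k <= N)%N ->
  \sum_(j < N.+1) (-1)^+(j + k) * ('C(j,k))%:R * ('C(m,j))%:R = ((m == k)%N)%:R :> R.
Proof.
move=> mN kN; case: (ltnP m k) => [mk | km].
  rewrite (ltn_eqF mk) big1 // => j _.
  case: (leqP j m) => [jm | mj].
    by rewrite bin_small ?mulr0 ?mul0r //; apply: leq_ltn_trans mk.
  by rewrite (bin_small mj) mulr0.
rewrite (@sum_window R (fun j => (-1)^+(j + k) * ('C(j,k))%:R * ('C(m,j))%:R) N.+1 k m) //; last first.
  move=> j _ /orP[jk|mj]; first by rewrite bin_small ?mulr0 ?mul0r.
  by rewrite (bin_small mj) mulr0.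
rewrite (eq_bigr (fun i : 'I_(m - k).+1 => ('C(m,k))%:R * ((-1)^+i * ('C(m - k, i))%:R))); last first.
  move=> i _.
  have ikm : (k + i <= m)%N by rewrite -leq_subRL // -ltnS.
  have -> : (-1)^+(k + i + k) = (-1)^+i :> R.
    by rewrite -signr_odd addnAC addnn oddD odd_double addFb signr_odd.
  rewrite -mulrA -natrM mulnC binprod ?leq_addr // addKn natrM; ring.
rewrite -mulr_sumr altbin subn_eq0.
case: eqP => [->|]; first by rewrite binn leqnn mulr1.
by move=> ne; rewrite (_ : (m <= k)%N = false) ?mulr0 //; apply/negbTE; rewrite -ltnNge ltn_neqAle km andbT; apply/eqP => e; apply: ne.
Qed.

Lemma fixpart N j : (\sum_(m < N.+1) #|[set s : 'S_N | nfix s == m]| * 'C(m,j)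
   = \sum_(s : 'S_N) 'C(nfix s, j))%N.
Proof.
symmetry; transitivity (\sum_(s:'S_N) \sum_(m < N.+1) ((nfix s == m) : nat) * 'C(m,j))%N.
  apply: eq_bigr => s _.
  have lt : (nfix s < N.+1)%N.
    by rewrite ltnS /nfix; have := max_card [set i | s i == i]; rewrite card_ord.
  rewrite (bigD1 (Ordinal lt)) //= eqxx mul1n big1 ?addn0 // => m /eqP ne.
  case: eqP => //= e; exfalso; apply: ne; apply: val_inj; by rewrite /= e.
rewrite exchange_big /=; apply: eq_bigr => m _; rewrite -big_distrl /=; congr (_ * _)%N.
rewrite -sum1_card [in RHS]big_mkcond /=.
by apply: eq_bigr => s _; rewrite inE; case: eqP.
Qed.

Lemma piN_formula (R : realType) N k : (k <= N)%N ->
  piN R N k = (\sum_(i < (N - k).+1) (-1)^+i / (i`!)%:R) / (k`!)%:R.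
Proof.
move=> kN.
set g := fun m => (#|[set s : 'S_N | nfix s == m]|)%:R : R.
have mom j : \sum_(m < N.+1) g m * ('C(m,j))%:R = ('C(N,j) * (N-j)`!)%:R.
  by rewrite -(fixmom N j) -fixpart natr_sum; apply: eq_bigr => m _; rewrite natrM.
have inv : g k = \sum_(j < N.+1) (-1)^+(j+k) * ('C(j,k))%:R * ('C(N,j) * (N-j)`!)%:R.
  have kN1 : (k < N.+1)%N by [].
  transitivity (\sum_(m < N.+1) g m * (((m : nat) == k)%N)%:R).
    rewrite (bigD1 (Ordinal kN1)) //= eqxx mulr1 big1 ?addr0 // => m /eqP ne.
    case: eqP => e; last by rewrite mulr0.
    by exfalso; apply: ne; apply: val_inj; rewrite /= e.
  transitivity (\sum_(m < N.+1) g m * \sum_(j < N.+1) (-1)^+(j+k) * ('C(j,k))%:R * ('C(m,j))%:R).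
    by apply: eq_bigr => m _; rewrite Sid // -ltnS.
  under eq_bigr do rewrite mulr_sumr.
  rewrite exchange_big /=; apply: eq_bigr => j _.
  rewrite -mom mulr_sumr; apply: eq_bigr => m _; ring.
rewrite /piN -/(g k) inv mulr_suml.
have fN : (N`!)%:R != 0 :> R by rewrite pnatr_eq0 -lt0n fact_gt0.
rewrite (eq_bigr (fun j : 'I_N.+1 => (-1)^+(j+k) * ('C(j,k))%:R / (j`!)%:R)); last first.
  move=> j _; have jN : (j <= N)%N by rewrite -ltnS.
  have fj : (j`!)%:R != 0 :> R by rewrite pnatr_eq0 -lt0n fact_gt0.
  have fnj : ((N - j)`!)%:R != 0 :> R by rewrite pnatr_eq0 -lt0n fact_gt0.
  rewrite -(bin_fact jN) !natrM; field.
  by rewrite fj fnj pnatr_eq0 -lt0n bin_gt0.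
etransitivity.
  apply: (@sum_window R (fun j => (-1)^+(j+k) * ('C(j,k))%:R / (j`!)%:R) N.+1 k N) => //.
  move=> j jn /orP[jk|mj]; first by rewrite bin_small ?mulr0 ?mul0r.
  by exfalso; move: mj; rewrite ltnNge -ltnS jn.
rewrite /=.
rewrite mulr_suml; apply: eq_bigr => i _.
have -> : (-1)^+(k + i + k) = (-1)^+i :> R.
  by rewrite -signr_odd addnAC addnn oddD odd_double addFb signr_odd.
have e := bin_fact (leq_addr i k); rewrite addKn in e.
rewrite -e !natrM.
have fk : (k`!)%:R != 0 :> R by rewrite pnatr_eq0 -lt0n fact_gt0.
have fi : (i`!)%:R != 0 :> R by rewrite pnatr_eq0 -lt0n fact_gt0.
have cb : ('C(k + i, k))%:R != 0 :> R by rewrite pnatr_eq0 -lt0n bin_gt0 leq_addr.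
field; by rewrite fk fi cb.
Qed.
Lemma alt_gen (R : realType) n : forall (t : nat -> R), (forall i, 0 <= t i) -> (forall i, t i.+1 <= t i) ->
  0 <= \sum_(i < n) (-1)^+i * t i <= t 0 /\ ((0 < n)%N -> t 0 - t 1 <= \sum_(i < n) (-1)^+i * t i).
Proof.
elim: n => [|n IH] t t0 td.
  by rewrite big_ord0 lexx t0.
have [/andP[h1 h2] _] := IH (fun i => t i.+1) (fun i => t0 i.+1) (fun i => td i.+1).
rewrite big_ord_recl /= expr0 mul1r.
have -> : \sum_(i < n) (-1) ^+ (bump 0 i) * t (bump 0 i) = - \sum_(i < n) (-1) ^+ i * t i.+1.
  rewrite -sumrN; apply: eq_bigr => i _; rewrite /bump /= add1n exprS; ring.
split; last by move=> _; lra.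
have := td 0%N; lra.
Qed.

Definition E (R : realType) m : R := \sum_(i < m.+1) (-1)^+i / (i`!)%:R.

Lemma fact_pos (R : realType) n : 0 < (n`!)%:R :> R.
Proof. by rewrite ltr0n fact_gt0. Qed.

Lemma tdec (R : realType) a : forall i, ((i + a).+1`!)%:R^-1 <= ((i + a)`!)%:R^-1 :> R.
Proof.
move=> i; rewrite lef_pV2 ?posrE ?fact_pos // ler_nat factS.
by rewrite leq_pmull.
Qed.

Lemma Ebound (R : realType) m m' : (m <= m')%N -> `|E R m' - E R m| <= ((m.+1)`!)%:R^-1.
Proof.
move=> mm'; rewrite /E -!(big_mkord xpredT (fun i => (-1)^+i / (i`!)%:R)).
rewrite (@big_cat_nat _ _ _ m.+1 0 m'.+1) //= addrAC subrr add0r.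
rewrite -{1}(add0n m.+1) big_addn.
rewrite (eq_bigr (fun i => (-1)^+(m.+1) * ((-1)^+i * ((i + m.+1)`!)%:R^-1))); last first.
  by move=> i _; rewrite exprD; ring.
rewrite -mulr_sumr normrM normrX normrN1 expr1n mul1r big_mkord.
have [/andP[h1 h2] _] := @alt_gen R (m'.+1 - m.+1) (fun i => ((i + m.+1)`!)%:R^-1 : R)
  (fun i => ltW (eq_ind_r is_true (fact_pos R _) (invr_gt0 _))) (fun i => tdec R m.+1 i).
by rewrite ger0_norm // -(add0n m.+1).
Qed.

Lemma Elow (R : realType) m : 3%:R^-1 <= E R m.+3.
Proof.
rewrite /E big_ord_recl big_ord_recl /=.
rewrite (eq_bigr (fun i : 'I_m.+2 => (-1)^+i * ((i + 2)`!)%:R^-1)); last first.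
  move=> i _; rewrite /bump /= !add1n !exprS addn2; ring.
have [_ h] := @alt_gen R m.+2 (fun i => ((i + 2)`!)%:R^-1 : R)
  (fun i => ltW (eq_ind_r is_true (fact_pos R _) (invr_gt0 _))) (fun i => tdec R 2 i).
have := h isT; rewrite /= /bump /=.
rewrite (_ : (2`!)%:R = 2 :> R) // (_ : (3`!)%:R = 6 :> R) // expr0 expr1 (_ : (1`!)%:R = 1 :> R) //.
rewrite !divr1.
move=> H; have : 2^-1 - 6^-1 = 3^-1 :> R by field.
lra.
Qed.
Lemma tv_le (R : realType) M (mu nu : nat -> R) :
  tvM M mu nu <= \sum_(k < M) `|mu k - nu k|.
Proof.
rewrite /tvM; apply: ge_sup.
  by exists (`|massM M mu set0 - massM M nu set0|); exists set0.
move=> y [S _ <-]; rewrite /massM -sumrB.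
apply: le_trans (ler_norm_sum _ _ _) _.
rewrite [X in _ <= X](bigID (fun k : 'I_M => `[< S k >])) /= lerDl.
by apply: sumr_ge0 => k _; apply: normr_ge0.
Qed.

Lemma tv_gen (R : realType) M (a b : nat -> R) c :
  0 < \sum_(k < M) b k -> (forall k, 0 <= b k) ->
  0 < c * \sum_(k < M) b k - \sum_(k < M) `|a k - c * b k| ->
  \sum_(k < M) `|condlaw M a k - condlaw M b k| <=
    2 * (\sum_(k < M) `|a k - c * b k|) / (c * \sum_(k < M) b k - \sum_(k < M) `|a k - c * b k|).
Proof.
set A := \sum_(k < M) a k; set B := \sum_(k < M) b k; set d := (\sum_(k < M) `|a k - c * b k| : R).
move=> B0 b0 L0.
have d0 : 0 <= d by apply: sumr_ge0 => k _; apply: normr_ge0.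
have hD : `|c * B - A| <= d.
  rewrite /B /A mulr_sumr -sumrB; apply: le_trans (ler_norm_sum _ _ _) _.
  by apply: ler_sum => k _; rewrite distrC.
have AL : c * B - d <= A.
  have := ler_norm (c * B - A); lra.
have A0 : 0 < A by apply: lt_le_trans AL.
have step : forall k : 'I_M, `|condlaw M a k - condlaw M b k| <=
    `|a k - c * b k| / A + b k * (`|c * B - A| / (A * B)).
  move=> k; rewrite /condlaw ltn_ord -/A -/B.
  have -> : a k / A - b k / B = (a k - c * b k) / A + b k * ((c * B - A) / (A * B)).
    by field; rewrite gt_eqF // gt_eqF.
  apply: le_trans (ler_normD _ _) _; apply: lerD.
    by rewrite normrM (ger0_norm (x := A^-1)) // invr_ge0 ltW.
  rewrite normrM ger0_norm // normrM (ger0_norm (x := (A * B)^-1)) //.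
  by rewrite invr_ge0 mulr_ge0 // ltW.
apply: le_trans (ler_sum _ (fun k _ => step k)) _.
rewrite big_split /= -mulr_suml -mulr_suml -/B.
have e1 : d / A + B * (`|c * B - A| / (A * B)) = (d + `|c * B - A|) / A.
  have key : forall x y u v : R, u != 0 -> v != 0 -> x/u + v*(y/(u*v)) = (x+y)/u.
    by move=> x y u v u0 v0; field; rewrite u0 v0.
  by apply: key; apply: lt0r_neq0.
rewrite -/d e1.
have h1 : (d + `|c * B - A|) / A <= (2 * d) / A.
  by rewrite ler_pM2r ?invr_gt0 //; lra.
apply: le_trans h1 _; rewrite -/d.
have Hd : 0 <= 2 * d by rewrite mulr_ge0.
have Hi : A^-1 <= (c * B - d)^-1 by rewrite lef_pV2 ?posrE.
exact: (ler_wpM2l Hd Hi).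
Qed.

Lemma condlaw_scale (R : realType) M (b : nat -> R) l : l != 0 ->
  forall k, condlaw M (fun k => l * b k) k = condlaw M b k.
Proof.
move=> l0 k; rewrite /condlaw; case: ifP => // _; rewrite -mulr_sumr.
case: (eqVneq (\sum_(j < M) b j) 0) => [->|h]; first by rewrite mulr0 !invr0 !mulr0.
by field; rewrite l0 h.
Qed.

Lemma sum2 (R : realType) n : \sum_(k < n.+1) ('C(n,k))%:R = 2^+n :> R.
Proof.
have := exprD1n (1 : R) n; rewrite (_ : 1 + 1 = 2 :> R) // => ->.
by apply: eq_bigr => i _; rewrite expr1n.
Qed.

Lemma fnum n : (12 * 2^(n+7) <= (n+7)`!)%N.
Proof.
elim: n => [|n IH]; first by [].
rewrite addSn factS expnS mulnCA.
apply: leq_mul.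
  by rewrite ltnS addnC.
exact: IH.
Qed.

Lemma main_bound (R : realType) N : (8 <= N)%N ->
  tvM (N - 3) (check_pi R N) (zeta R N) <= 8 * (2^+(N.+1) / ((N.+1)`!)%:R) /\
  2^+(N.+1) / ((N.+1)`!)%:R <= 12^-1 :> R.
Proof.
move=> N8.
set u := 2^+(N.+1) / ((N.+1)`!)%:R : R.
have u0 : 0 <= u by rewrite /u divr_ge0 // ?exprn_ge0 // ltW // fact_pos.
have u12 : u <= 12^-1.
  have := fnum (N.+1 - 7); rewrite subnK; last by lia.
  move=> h; have hR : 12 * 2^+(N.+1) <= ((N.+1)`!)%:R :> R.
    by move: h; rewrite -(ler_nat R) natrM natrX.
  rewrite /u ler_pdivrMr ?fact_pos //; lra.
set M := (N - 3)%N.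
set b := fun k => (k`!)%:R^-1 : R.
set c := E R N.
have B1 : 1 <= \sum_(k < M) b k.
  have -> : M = (N - 4).+1 by rewrite /M; lia.
  rewrite big_ord_recl /b /= invr1 lerDl; apply: sumr_ge0 => k _.
  by rewrite invr_ge0 ltW // fact_pos.
have c3 : 3^-1 <= c.
  have := Elow R (N - 3); rewrite (_ : (N - 3).+3 = N) //.
  by lia.
have dle : \sum_(k < M) `|piN R N k - c * b k| <= u.
  apply: (@le_trans _ _ (\sum_(k < M) ((k`!)%:R^-1 * ((N.+1 - k)`!)%:R^-1))).
    apply: ler_sum => k _.
    have kN : (k <= N)%N by have := ltn_ord k; rewrite /M; lia.
    rewrite piN_formula // -/(E R (N - k)) /b -mulrBl mulrC normrM ger0_norm; last first.
      by rewrite invr_ge0 ltW // fact_pos.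
    apply: ler_wpM2l; first by rewrite invr_ge0 ltW // fact_pos.
    rewrite distrC (_ : (N.+1 - k)%N = (N - k).+1); last by lia.
    exact: Ebound (leq_subr k N).
  have MN : (M <= N.+2)%N by rewrite /M; lia.
  rewrite (big_ord_widen _ (fun k => (k`!)%:R^-1 * ((N.+1 - k)`!)%:R^-1) MN) big_mkcond /=.
  apply: (@le_trans _ _ (\sum_(k < N.+2) ((k`!)%:R^-1 * ((N.+1 - k)`!)%:R^-1))).
    apply: ler_sum => k _; case: ifP => _ //.
  rewrite /u -sum2 mulr_suml; rewrite le_eqVlt; apply/orP; left; apply/eqP; apply: eq_bigr => k _.
  have kN : (k <= N.+1)%N by rewrite -ltnS.
  rewrite -(bin_fact kN) !natrM.
  have f1 := fact_pos R k; have f2 := fact_pos R (N.+1 - k).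
  have f3 : 0 < ('C(N.+1, k))%:R :> R by rewrite ltr0n bin_gt0.
  by field; rewrite !gt_eqF.
split=> //.
apply: le_trans (tv_le _ _ _) _.
rewrite (eq_bigr (fun k : 'I_M => `|condlaw M (piN R N) k - condlaw M b k|)); last first.
  move=> k _; rewrite /check_pi /zeta -/M.
  rewrite (_ : @poisson1 R = fun k => expR (-1) * b k) //.
  by rewrite condlaw_scale // gt_eqF // expR_gt0.
have L0 : 0 < c * \sum_(k < M) b k - \sum_(k < M) `|piN R N k - c * b k|.
  have : 3^-1 <= c * \sum_(k < M) b k.
    rewrite -[3^-1]mulr1; apply: ler_pM => //; rewrite invr_ge0 //.
  lra.
apply: le_trans (tv_gen _ _ L0) _.
  apply: lt_le_trans B1; exact: ltr01.
  by move=> k; rewrite /b invr_ge0 ltW // fact_pos.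
rewrite ler_pdivrMr //.
set d := \sum_(k < M) `|piN R N k - c * b k|.
have : 3^-1 <= c * \sum_(k < M) b k.
  rewrite -[3^-1]mulr1; apply: ler_pM => //; rewrite invr_ge0 //.
set X := c * \sum_(k < M) b k => hX.
have dle2 : d <= u := dle.
have h4 : 0 <= X - d - 4^-1 by lra.
have := mulr_ge0 u0 h4.
have : 0 <= d by apply: sumr_ge0 => k _; apply: normr_ge0.
nra.
Qed.
Lemma Nstirl (R : realType) N : (N%:R)^+N <= expR (N%:R) * (N`!)%:R :> R.
Proof.
elim: N => [|N IH]; first by rewrite expr0 expR0 mul1r.
have e1 : 1 + 1 <= expR 1 :> R by apply: expR_ge1Dx.
have key : ((N.+1)%:R)^+N <= expR 1 * (N%:R)^+N :> R.
  case: N IH => [|N] _; first by rewrite !expr0 mulr1; lra.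
  set n := N.+1.
  have n0 : 0 < n%:R :> R by rewrite ltr0n.
  have h : (n.+1)%:R <= n%:R * expR (n%:R^-1) :> R.
    have H := expR_ge1Dx (n%:R^-1 : R).
    have : n%:R * (1 + n%:R^-1) <= n%:R * expR (n%:R^-1) :> R by rewrite ler_wpM2l // ltW.
    by rewrite mulrDr mulr1 mulfV ?gt_eqF // natr1.
  have := lerXn2r n _ _ h.
  rewrite exprMn -expRM_natl mulfV ?gt_eqF // => H; rewrite mulrC; apply: H.
    by rewrite nnegrE ler0n.
  by rewrite nnegrE mulr_ge0 ?ler0n ?expR_ge0.
rewrite exprS factS natrM -natr1 expRD natr1.
have p0 : 0 <= (N.+1)%:R :> R by rewrite ler0n.
have h1 : ((N.+1)%:R)^+N <= expR 1 * (expR (N%:R) * (N`!)%:R) :> R.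
  apply: le_trans key _; apply: ler_wpM2l => //; apply: expR_ge0.
have := ler_wpM2l p0 h1.
move=> h2; apply: le_trans h2 _.
rewrite le_eqVlt; apply/orP; left; apply/eqP; ring.
Qed.

Lemma bound5 (R : realType) N : (8 <= N)%N ->
  tvM (N - 3) (check_pi R N) (zeta R N) <= 5 * 2^+N / (N`!)%:R /\
  tvM (N - 3) (check_pi R N) (zeta R N) <= 1.
Proof.
move=> N8; have [h1 h2] := main_bound R N8.
split; last by apply: le_trans h1 _; lra.
apply: le_trans h1 _.
rewrite exprS factS natrM.
have f0 := fact_pos R N.
have N9 : 9 <= (N.+1)%:R :> R by rewrite ler_nat ltnS.
have v0 : 0 <= 2^+N / (N`!)%:R :> R by rewrite divr_ge0 ?exprn_ge0 // ltW.
have -> : 8 * (2 * 2 ^+ N / ((N.+1)%:R * (N`!)%:R)) = (16 / (N.+1)%:R) * (2^+N / (N`!)%:R) :> R.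
  by field; rewrite !gt_eqF //; apply: lt_le_trans N9; lra.
rewrite -[5 * 2 ^+ N / _]mulrA.
have H : 16 / (N.+1)%:R <= 5 :> R.
  rewrite ler_pdivrMr; last by apply: lt_le_trans N9; lra.
  lra.
exact: (ler_wpM2r v0 H).
Qed.

Unset Implicit Arguments.
Theorem mainTheorem12 (R : realType) :
  (exists chat : R, 0 < chat /\
     exists N0 : nat, forall N : nat, (N0 <= N)%N -> forall n : nat,
       tvM (N - 3) (check_pi R N) (zeta R N)
         <= (5 * 2 ^+ N * n%:R) / (N`!)%:R
            + 2 * expR (1 - chat * n%:R / (N%:R ^+ 3))) /\
  (forall eps : R, 0 < eps ->
     exists N0 : nat, forall N : nat, (N0 <= N)%N ->
       tvM (N - 3) (check_pi R N) (zeta R N)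
         <= expR ((-1 + eps) * (N%:R * ln (N%:R)))).
Proof.
have e1 : 1 + 1 <= expR 1 :> R by apply: expR_ge1Dx.
split.
  exists 1; split; first exact: ltr01.
  exists 8%N => N N8 n; have [b1 b2] := bound5 R N8.
  have f0 := fact_pos R N.
  case: n => [|n].
    rewrite mulr0 mul0r mulr0 mul0r subr0 add0r; lra.
  have h : 5 * 2 ^+ N / (N`!)%:R <= 5 * 2 ^+ N * (n.+1)%:R / (N`!)%:R :> R.
    rewrite [X in _ <= X]mulrAC.
    have w0 : 0 <= 5 * 2 ^+ N / (N`!)%:R :> R by rewrite divr_ge0 ?mulr_ge0 ?exprn_ge0 // ltW.
    by apply: ler_peMr => //; rewrite ler1n.
  have := expR_ge0 (1 - 1 * (n.+1)%:R / N%:R ^+ 3 : R); lra.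
move=> eps eps0.
exists (maxn 8 (Num.truncn (expR (6 / eps))).+1) => N.
rewrite geq_max => /andP[N8 NK].
have [b1 _] := bound5 R N8.
apply: le_trans b1 _.
set x := N%:R : R.
have x8 : 8 <= x by rewrite /x ler_nat.
have x0 : 0 < x by lra.
have hK : expR (6 / eps) < x.
  apply: lt_le_trans (truncnS_gt _) _; rewrite /x ler_nat //.
have lx : 6 / eps <= ln x.
  rewrite -(expRK (6 / eps)) ler_ln ?posrE ?expR_gt0 //; exact: ltW.
have elx : 6 <= eps * ln x.
  by rewrite -(ler_pdivrMl _ _ eps0) mulrC.
have f0 := fact_pos R N.
have P0 : 0 < 5 * 2^+N / (N`!)%:R :> R by rewrite divr_gt0 // mulr_gt0 // exprn_gt0.
rewrite -(lnK P0) ler_expR.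
rewrite lnM ?posrE ?mulr_gt0 ?exprn_gt0 ?invr_gt0 // lnM ?posrE ?exprn_gt0 //.
rewrite lnV ?posrE // lnXn //.
have st := Nstirl R N.
have : ln (x ^+ N) <= x + ln (N`!)%:R.
  rewrite -[x in x + _](expRK x) -lnM ?posrE ?expR_gt0 //.
  by rewrite ler_ln ?posrE ?mulr_gt0 ?expR_gt0 ?exprn_gt0.
rewrite lnXn // -mulr_natl -/x => hst.
have l5 : ln 5 < 5 :> R by apply: ln_sublinear.
have l2 : ln 2 < 2 :> R by apply: ln_sublinear.
rewrite -mulr_natl -/x.
have l20 : 0 <= ln 2 :> R by apply: ln_ge0; lra.
have := ler_wpM2l (ltW x0) (ltW l2).
have := ler_wpM2l (ltW x0) elx.
move=> hA hB; rewrite !mulr1 in hst *.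
rewrite -[ln x *+ N]mulr_natl -/x in hst.
rewrite -[ln 2 *+ N]mulr_natl -/x.
have -> : (-1 + eps) * (x * ln x) = x * (eps * ln x) - x * ln x by ring.
lra.
Qed.
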